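(* Let $P$ be a rooted forest on $[n]$ with natural labeling and let $\mathcal{M}^{\hat\partial}$ be the monoid of maps $\mathcal{L}(P)\to\mathcal{L}(P)$ generated by $\hat\partial_1,\dots,\hat\partial_n$. For every $x\in\mathcal{M}^{\hat\partial}$, the set $I_x$ is an upper set of $P$; more precisely, $I_x=\operatorname{Rfactor}(e)$ for some idempotent $e\in\mathcal{M}^{\hat\partial}$.
   Context: A rooted forest is a disjoint union of rooted trees, a rooted tree being a connected finite poset in which each element is covered by at most one element. $\mathcal{L}(P)=\{\pi\in S_n : i\prec j \Rightarrow \pi^{-1}_i<\pi^{-1}_j\}$ in one-line notation. $\pi\tau_i$ ($1\le i<n$) swaps $\pi_i,\pi_{i+1}$ if incomparable and is $\pi$ otherwise; $\partial_j=\tau_j\cdots\tau_{n-1}$; $\pi\hat\partial_i=\pi\partial_{\pi^{-1}_i}$. Maps act on the right, $\pi(xy)=(\pi x)y$; the monoid contains the identity. $\operatorname{im}(x)=\{\pi x:\pi\in\mathcal{L}(P)\}$; $\operatorname{rfactor}(x)$ is the longest word that is a common suffix of all elements of $\operatorname{im}(x)$; $\operatorname{Rfactor}(x)$ is its set of letters; $I_x=\{i\in[n]:\hat\partial_i x=x\}$. An upper set $S$ satisfies $a\in S,\ b\succeq a\Rightarrow b\in S$. *)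

(* Defs.v *)
From mathcomp Require Import all_boot.
Set Implicit Arguments. Unset Strict Implicit. Unset Printing Implicit Defensive.

(* A poset on [n] is encoded on 'I_n (labels 0..n-1 instead of 1..n) by a
   boolean relation [le] (le a b  <->  a ≼ b).  Words / permutations in
   one-line notation are sequences of 'I_n; positions are 0-based. *)

Section Defs.
Variable n : nat.
Variable le : rel 'I_n.

Definition lt (a b : 'I_n) : bool := (a != b) && le a b.
Definition incomp (a b : 'I_n) : bool := ~~ le a b && ~~ le b a.

Definition is_poset : Prop :=
  [/\ forall a, le a a,
      forall a b, le a b -> le b a -> a = b
    & forall a b c, le a b -> le b c -> le a c].

Definition covers (a b : 'I_n) : Prop :=
  lt a b /\ forall c, lt a c -> le c b -> c = b.

Definition rooted_forest : Prop :=
  is_poset /\ forall a b c, covers a b -> covers a c -> b = c.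

Definition natural_labeling : Prop := forall a b : 'I_n, lt a b -> (a < b)%N.

Definition linext (w : seq 'I_n) : Prop :=
  perm_eq w (enum 'I_n) /\
  forall i j, lt i j -> (index i w < index j w)%N.

(* tau_k (0-based k): swap positions k, k+1 if their entries are incomparable *)
Definition tau (k : nat) (w : seq 'I_n) : seq 'I_n :=
  match drop k w with
  | a :: b :: r => if incomp a b then take k w ++ b :: a :: r else w
  | _ => w
  end.

(* partial_j (0-based j) = tau_j tau_{j+1} ... tau_{n-2}, acting on the right *)
Definition dpart (j : nat) (w : seq 'I_n) : seq 'I_n :=
  foldl (fun w k => tau k w) w (iota j (n.-1 - j)).

(* hat partial_i : pi |-> pi partial_{pi^{-1}_i} *)
Definition hatd (i : 'I_n) (w : seq 'I_n) : seq 'I_n := dpart (index i w) w.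

(* An element of the monoid generated by the hatd_i is given by a word
   s = [:: i1; ...; ik] in the generators, denoting hatd_i1 ... hatd_ik
   (maps act on the right: apply hatd_i1 first). *)
Definition act (s : seq 'I_n) (w : seq 'I_n) : seq 'I_n :=
  foldl (fun w i => hatd i w) w s.

(* equality of monoid elements = equality as maps L(P) -> L(P) *)
Definition meq (s t : seq 'I_n) : Prop :=
  forall w, linext w -> act s w = act t w.

Definition idem_elt (s : seq 'I_n) : Prop := meq (s ++ s) s.

(* I_x = { i | hatd_i x = x } *)
Definition Iset (s : seq 'I_n) (i : 'I_n) : Prop := meq (i :: s) s.

Definition common_suffix (s : seq 'I_n) (v : seq 'I_n) : Prop :=
  forall w, linext w -> suffix v (act s w).

Definition is_rfactor (s : seq 'I_n) (v : seq 'I_n) : Prop :=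
  common_suffix s v /\ forall v', common_suffix s v' -> (size v' <= size v)%N.

Definition Rfactor (s : seq 'I_n) (i : 'I_n) : Prop :=
  exists v, is_rfactor s v /\ i \in v.

Definition upper_set (S : 'I_n -> Prop) : Prop :=
  forall a b, S a -> le a b -> S b.

End Defs.

(* Main.v *)
Require Import Defs.
From mathcomp Require Import all_boot.
From mathcomp Require Import zify.
From Stdlib Require Import Classical.
Set Implicit Arguments. Unset Strict Implicit. Unset Printing Implicit Defensive.

Lemma index_swap (T : eqType) (p : seq T) a b r x y :
  uniq (p ++ a :: b :: r) ->
  index x (p ++ a :: b :: r) < index y (p ++ a :: b :: r) ->
  ~~ ((x == a) && (y == b)) ->
  index x (p ++ b :: a :: r) < index y (p ++ b :: a :: r).
Proof.
move=> Hu.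
have Hab : a != b.
  by move: Hu; rewrite cat_uniq /= inE; case/and3P => _ _ /andP [/norP [] ].
rewrite !index_cat.
case Hx: (x \in p); case Hy: (y \in p) => //.
- move=> _ _; rewrite (leq_trans (_ : index x p < size p)) ?leq_addr ?index_mem ?Hx //.
- move=> H; exfalso; move: H; have := (index_mem y p); rewrite Hy => H1 H2.
  by have := leq_trans H2 (ltnW H1); rewrite ltnNge leq_addr.
- rewrite !ltn_add2l /=.
  case: (eqVneq a x) => [<-|Hax]; case: (eqVneq b x) => [Ebx|Hbx];
  case: (eqVneq a y) => [Eay|Hay]; case: (eqVneq b y) => [Eby|Hby] //=;
  rewrite ?eqxx ?Ebx ?Eby ?Eay //=; try by subst; rewrite eqxx in Hab.
all: by case: ifP.
Qed.

Lemma rem_pivot (T : eqType) (x : T) s1 s2 : x \notin s1 -> rem x (s1 ++ x :: s2) = s1 ++ s2.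
Proof.
elim: s1 => [|y s1 IH] /=; first by rewrite eqxx.
rewrite inE negb_or => /andP [Hxy Hx]; rewrite eq_sym (negbTE Hxy) IH //.
Qed.

Definition fb (s : seq bool) := rem true s ++ [:: true].

Lemma rem_catl (T : eqType) (x : T) s1 s2 : x \in s1 -> rem x (s1 ++ s2) = rem x s1 ++ s2.
Proof.
elim: s1 => [//|y s1 IH] /=; rewrite inE.
case: (eqVneq y x) => [//|Hne] H.
by rewrite IH //; move: H; rewrite eq_sym (negbTE Hne).
Qed.

Lemma count_rem_true s : count id (rem true s) = count id s - 1.
Proof.
case: (boolP (true \in s)) => H; first by rewrite count_rem H.
rewrite rem_id //.
have : ~~ has id s by apply/hasP => [[b Hb Hb']]; move: H; rewrite -Hb' Hb.
by rewrite has_count => H1; lia.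
Qed.

Lemma iter_rem_count k s : count id (iter k (rem true) s) = count id s - k.
Proof. elim: k => [|k IH] /=; first by rewrite subn0. by rewrite count_rem_true IH subnS; lia. Qed.

Lemma iter_rem_size k s : k <= count id s -> size (iter k (rem true) s) = size s - k.
Proof.
elim: k => [|k IH] /= Hk; first by rewrite subn0.
have Hin : true \in iter k (rem true) s.
  by rewrite -has_pred1 has_count; rewrite (eq_count (a2 := id)) ?iter_rem_count; [lia | case].
by rewrite size_rem // IH ?subnS //; lia.
Qed.

Lemma iter_fb k s : k <= count id s -> iter k fb s = iter k (rem true) s ++ nseq k true.
Proof.
elim: k => [|k IH] Hk /=; first by rewrite cats0.
have Hin : true \in iter k (rem true) s.
  by rewrite -has_pred1 has_count; rewrite (eq_count (a2 := id)) ?iter_rem_count; [lia | case].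
rewrite /fb IH; last by lia.
by rewrite rem_catl // -catA -(nseqD k 1) addn1.
Qed.

Lemma nseq_false (s : seq bool) : count id s = 0 -> s = nseq (size s) false.
Proof. by elim: s => [|[] s IH] //= H; rewrite -IH. Qed.

Lemma iter_fb_fin N s : 0 < count id s -> count id s <= N ->
  iter N fb s = nseq (size s - count id s) false ++ nseq (count id s) true.
Proof.
move=> H0 HN.
have E : iter (count id s) fb s = nseq (size s - count id s) false ++ nseq (count id s) true.
  rewrite iter_fb // (nseq_false (s := iter (count id s) (rem true) s)).
    by rewrite iter_rem_size.
  by rewrite iter_rem_count subnn.
rewrite -(subnK HN) iterD E.
elim: (N - count id s) => //= m ->.
rewrite /fb -(prednK H0) /= rem_pivot; last by rewrite mem_nseq andbF.
by rewrite -catA -(nseqD _ 1) addn1.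
Qed.


Lemma eq_by_mask (T : eqType) (p : pred T) u v : map p u = map p v ->
  filter p u = filter p v -> filter (predC p) u = filter (predC p) v -> u = v.
Proof.
elim: u v => [|a u IH] [|b v] //= [Hab Hm]; rewrite -Hab.
case: (p a) => /=.
  by move=> [Eab Hf] Hg; rewrite Eab (IH v Hm Hf Hg).
by move=> Hf [Eab Hg]; rewrite Eab (IH v Hm Hf Hg).
Qed.

Lemma map_filterC (T : eqType) (p : pred T) s :
  map p (filter (predC p) s) = nseq (count (predC p) s) false.
Proof. by elim: s => [|a s IH] //=; case E: (p a) => /=; rewrite ?E ?add0n IH. Qed.

Lemma map_filterT (T : eqType) (p : pred T) s :
  map p (filter p s) = nseq (count p s) true.
Proof. by elim: s => [|a s IH] //=; case E: (p a) => /=; rewrite ?E ?add0n IH. Qed.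

Lemma filterCT (T : eqType) (p : pred T) s : filter p (filter (predC p) s) = [::].
Proof. by elim: s => [|a s IH] //=; case E: (p a) => //=; rewrite E. Qed.

Lemma filterTC (T : eqType) (p : pred T) s : filter (predC p) (filter p s) = [::].
Proof. by elim: s => [|a s IH] //=; case E: (p a) => //=; rewrite E. Qed.

Lemma index_filter_lt (T : eqType) (a : pred T) s x y : uniq s -> a x -> a y ->
  x \in s -> y \in s -> index x s < index y s -> index x (filter a s) < index y (filter a s).
Proof.
elim: s => [//|z s IH] /= /andP [Hz Hu] Ha Hb; rewrite !inE.
case: (eqVneq z x) => [Ezx|Hzx]; case: (eqVneq z y) => [Ezy|Hzy] //=.
- by subst; rewrite Ha /= eqxx (negbTE Hzy).
- move=> Hx Hy Hlt; have Hlt' : index x s < index y s by [].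
  case: (a z) => /=; last exact: IH.
  by rewrite (negbTE Hzx) (negbTE Hzy) ltnS; apply: IH.
Qed.

Lemma catIr (T : Type) (a b c : seq T) : a ++ c = b ++ c -> a = b.
Proof.
move=> E; have Hs : size a = size b by move: (congr1 size E); rewrite !size_cat; lia.
by rewrite -(take_size_cat c (erefl (size a))) E take_size_cat.
Qed.

Lemma suffix_of_suffix (T : eqType) (a b W : seq T) :
  suffix a W -> suffix b W -> size a <= size b -> suffix a b.
Proof.
rewrite !suffixE => /eqP Ea /eqP Eb Hab.
have Hb : size b <= size W by rewrite -Eb size_drop leq_subr.
have Ha : size a <= size W by rewrite -Ea size_drop leq_subr.
apply/eqP; rewrite -[X in _ = X]Ea -[X in drop _ X]Eb drop_drop.
by congr drop; lia.
Qed.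

Lemma exists_list (T : eqType) (P : T -> Prop) (l : seq T) :
  exists s : seq T, forall i, i \in s <-> (i \in l /\ P i).
Proof.
elim: l => [|a l [s Hs]]; first by exists [::] => i; split => // [[]].
case: (classic (P a)) => Ha.
  exists (a :: s) => i; rewrite !inE; split.
    by case/orP => [/eqP ->|/Hs [H1 H2]]; [rewrite eqxx | rewrite H1 orbT].
  case=> /orP [/eqP ->|H1] H2; first by rewrite eqxx.
  by rewrite (proj2 (Hs i) (conj H1 H2)) orbT.
exists s => i; rewrite inE; split.
  by move/Hs => [H1 H2]; rewrite H1 orbT.
case=> /orP [/eqP ->|H1] H2; first by [].
exact: (proj2 (Hs i) (conj H1 H2)).
Qed.

Lemma exists_max (P : nat -> Prop) N : P 0 ->
  exists k, [/\ k <= N, P k & forall k', k' <= N -> P k' -> k' <= k].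
Proof.
move=> H0; elim: N => [|N [k [Hk Pk Hmax]]].
  by exists 0; split => // k'; rewrite leqn0 => /eqP ->.
case: (classic (P N.+1)) => HN.
  by exists N.+1; split.
exists k; split => //; first by apply: leq_trans Hk _.
move=> k'; rewrite leq_eqVlt => /orP [/eqP ->|] // Hk' Pk'.
by apply: Hmax.
Qed.

Section Aux.
Variable n : nat.
Variable le : rel 'I_n.
Hypothesis Hposet : is_poset le.

Lemma le_refl a : le a a. Proof. by case: Hposet. Qed.
Lemma le_anti a b : le a b -> le b a -> a = b. Proof. by case: Hposet => _ H _; apply: H. Qed.
Lemma le_trans a b c : le a b -> le b c -> le a c. Proof. by case: Hposet => _ _ H; apply: H. Qed.

Lemma linext_uniq w : linext le w -> uniq w.
Proof. by case=> /perm_uniq -> _; exact: enum_uniq. Qed.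
Lemma linext_size w : linext le w -> size w = n.
Proof. by case=> /perm_size -> _; rewrite size_enum_ord. Qed.
Lemma linext_mem w x : linext le w -> x \in w.
Proof. by case=> /perm_mem -> _; rewrite mem_enum. Qed.

Lemma tau_linext k w : linext le w -> linext le (tau le k w).
Proof.
move=> Hw; have Hu := linext_uniq Hw; case: Hw => Hp Ho.
rewrite /tau; case E: (drop k w) => [|a [|b r]]; try by split.
case: ifP => Hinc; last by split.
have Ew : w = take k w ++ [:: a, b & r] by rewrite -E cat_take_drop.
split.
  apply: perm_trans Hp; rewrite {2}Ew perm_cat2l.
  by apply/permP => q /=; rewrite !addnA (addnC (q b)).
move=> x y Hxy; apply: index_swap.
- by rewrite -Ew.
- by rewrite -Ew; apply: Ho.
apply/negP => /andP [/eqP Ex /eqP Ey]; subst x y.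
by move: Hxy Hinc; rewrite /lt /incomp => /andP [_ ->].
Qed.

Lemma dpart_linext j w : linext le w -> linext le (dpart le j w).
Proof.
rewrite /dpart; elim: (iota _ _) w => [|k s IH] w Hw //=.
by apply: IH; apply: tau_linext.
Qed.

Lemma hatd_linext i w : linext le w -> linext le (hatd le i w).
Proof. exact: dpart_linext. Qed.

Lemma act_linext s w : linext le w -> linext le (act le s w).
Proof.
rewrite /act; elim: s w => [|k s IH] w Hw //=.
by apply: IH; apply: hatd_linext.
Qed.

Fixpoint bub (a : 'I_n) (r : seq 'I_n) : seq 'I_n :=
  match r with
  | [::] => [:: a]
  | b :: r' => if incomp le a b then b :: bub a r' else a :: bub b r'
  end.

Lemma foldl_tau m : forall p a r, size r = m ->
  foldl (fun w k => tau le k w) (p ++ a :: r) (iota (size p) m) = p ++ bub a r.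
Proof.
elim: m => [|m IH] p a [|b r] //= [Hs].
rewrite /tau drop_size_cat // take_size_cat //.
case: ifP => _.
  by rewrite -cat_rcons -(size_rcons p b) IH // cat_rcons.
by rewrite -cat_rcons -(size_rcons p a) IH // cat_rcons.
Qed.

Lemma hatd_bub i w : linext le w ->
  hatd le i w = take (index i w) w ++ bub i (drop (index i w).+1 w).
Proof.
move=> Hw; have Hs := linext_size Hw; have Hi := linext_mem i Hw.
rewrite /hatd /dpart.
have Hj : index i w < size w by rewrite index_mem.
rewrite -{1}(cat_take_drop (index i w) w) (drop_nth i Hj) nth_index //.
have -> : iota (index i w) (n.-1 - index i w) =
          iota (size (take (index i w) w)) (size (drop (index i w).+1 w)).
  by rewrite size_takel ?(ltnW Hj) // size_drop; congr iota; lia.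
by rewrite foldl_tau.
Qed.


Hypothesis Hcov : forall a b c, covers le a b -> covers le a c -> b = c.
Hypothesis Hnat : natural_labeling le.

Lemma cover_below i a : lt le i a -> exists c, covers le i c /\ le c a.
Proof.
move=> Hia.
pose P := [pred c | lt le i c && le c a].
have Pa : P a by rewrite /= Hia le_refl.
case: (@arg_minnP _ a P (fun c : 'I_n => nat_of_ord c) Pa) => c /andP [Hic Hca] Hmin.
exists c; split => //; split => // d Hid Hdc.
case: (eqVneq d c) => // Hne; exfalso.
have Hdc' : lt le d c by rewrite /lt Hne Hdc.
have HPd : P d by rewrite inE Hid (le_trans Hdc Hca).
have := Hnat Hdc'; have := Hmin d HPd; lia.
Qed.

Lemma chain_aux k : forall i a b : 'I_n, n - i <= k -> le i a -> le i b -> le a b || le b a.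
Proof.
elim: k => [|k IH] i a b Hk Hia Hib.
  by exfalso; have := ltn_ord i; lia.
case: (eqVneq i a) => [<-|Hia']; first by rewrite Hib.
case: (eqVneq i b) => [<-|Hib']; first by rewrite Hia orbT.
have [c1 [Hc1 H1]] := @cover_below i a (introT andP (conj Hia' Hia)).
have [c2 [Hc2 H2]] := @cover_below i b (introT andP (conj Hib' Hib)).
have E := Hcov Hc1 Hc2; subst c2.
apply: (IH c1) => //.
have := Hnat (proj1 Hc1); lia.
Qed.

Lemma chain i a b : le i a -> le i b -> le a b || le b a.
Proof. by apply: (@chain_aux n); apply: leq_subr. Qed.


Lemma sorted_index (w : seq 'I_n) : uniq w -> sorted (fun x y => index x w < index y w) w.
Proof.
move=> Hu; case Ew: w => [//|x0 w']; rewrite -Ew.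
apply/(sortedP x0) => k Hk.
by rewrite !index_uniq // ltnW.
Qed.

Lemma bub_prop w i : linext le w -> forall r a,
  sorted (fun x y => index x w < index y w) (a :: r) -> le i a ->
  (forall T : pred 'I_n, (forall x, T x -> ~~ le i x) ->
     filter T (bub a r) = filter T (a :: r)) /\
  map (le i) (bub a r) = map (le i) r ++ [:: true].
Proof.
move=> Hw; elim=> [|b r IH] a Hs Ha.
  by split => //=; rewrite Ha.
have Rtr : transitive (fun x y : 'I_n => index x w < index y w).
  by move=> y x z; apply: ltn_trans.
move: (Hs) => /= /andP [Hab Hpb].
have Hsa : sorted (fun x y => index x w < index y w) (a :: r).
  apply: (subseq_sorted Rtr _ Hs).
  have -> : a :: r = [:: a] ++ r by [].
  by rewrite (_ : [:: a, b & r] = [:: a] ++ b :: r) // cat_subseq ?subseq_cons.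
have HTa : forall T : pred 'I_n, (forall x, T x -> ~~ le i x) -> T a = false.
  by move=> T HT; apply/negbTE/negP => /HT; rewrite Ha.
rewrite /=; case: ifP => Hinc.
- have Hib : le i b = false.
    apply/negbTE/negP => Hib; have := chain Ha Hib.
    by move: Hinc; rewrite /incomp => /andP [/negbTE -> /negbTE ->].
  have [Hf Hm] := IH a Hsa Ha.
  split; last by rewrite /= Hm Hib.
  by move=> T HT; rewrite /= (Hf T HT) /= (HTa T HT).
- have Hib : le i b.
    move: Hinc; rewrite /incomp => /negbT; rewrite negb_and !negbK => /orP [H|H].
      exact: le_trans Ha H.
    case: (eqVneq b a) => [E|Hne]; first by move: Hab; rewrite E ltnn.
    have : index b w < index a w by case: Hw => _; apply; rewrite /lt Hne H.
    by rewrite ltnNge (ltnW Hab).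
  have [Hf Hm] := IH b Hpb Hib.
  split; last by rewrite /= Hm Ha Hib.
  by move=> T HT; rewrite /= (Hf T HT) /= (HTa T HT).
Qed.



Lemma index_take_lt (T : eqType) (x : T) j s : x \in take j s -> index x s < j.
Proof.
move=> Hx; rewrite -(cat_take_drop j s) index_cat Hx.
apply: (leq_trans (_ : _ < size (take j s))); first by rewrite index_mem.
by rewrite size_take; case: ifP => // /negbT; rewrite -leqNgt.
Qed.

Lemma hatd_decomp i w : linext le w ->
  w = take (index i w) w ++ i :: drop (index i w).+1 w /\
  sorted (fun x y => index x w < index y w) (i :: drop (index i w).+1 w).
Proof.
move=> Hw; have Hi := linext_mem i Hw.
have Hj : index i w < size w by rewrite index_mem.
have E : drop (index i w) w = i :: drop (index i w).+1 w by rewrite (drop_nth i Hj) nth_index.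
split; first by rewrite -E cat_take_drop.
rewrite -E; apply: (subseq_sorted _ (drop_subseq _ _) (sorted_index (linext_uniq Hw))).
by move=> y x z; apply: ltn_trans.
Qed.

Lemma hatd_filter i w (T : pred 'I_n) : linext le w ->
  (forall x, T x -> ~~ le i x) -> filter T (hatd le i w) = filter T w.
Proof.
move=> Hw HT; have [E Hs] := hatd_decomp i Hw.
have [Hf _] := bub_prop Hw Hs (le_refl i).
by rewrite hatd_bub // filter_cat Hf // [in RHS]E filter_cat.
Qed.

Lemma hatd_mask i w : linext le w ->
  map (le i) (hatd le i w) = rem true (map (le i) w) ++ [:: true].
Proof.
move=> Hw; have [E Hs] := hatd_decomp i Hw.
have [_ Hm] := bub_prop Hw Hs (le_refl i).
have Em : map (le i) w = map (le i) (take (index i w) w) ++ true :: map (le i) (drop (index i w).+1 w).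
  by rewrite {1}E map_cat /= le_refl.
rewrite hatd_bub // map_cat Hm Em rem_pivot ?catA //.
apply/mapP => [[x Hx /esym Hle]].
have Hlt := index_take_lt Hx.
case: (eqVneq i x) => [Ex|Hne]; first by move: Hlt; rewrite Ex ltnn.
have : index i w < index x w by case: Hw => _; apply; rewrite /lt Hne Hle.
by rewrite ltnNge (ltnW Hlt).
Qed.


Lemma enum_linext : linext le (enum 'I_n).
Proof. by split => // x y /Hnat; rewrite !index_enum_ord. Qed.

Lemma pairwise_chain i w : linext le w -> pairwise le (filter (le i) w).
Proof.
move=> Hw; have Hu := linext_uniq Hw.
have H : pairwise (fun x y => le i x ==> le i y ==> le x y) w.
  case Ew: w => [//|x0 w']; rewrite -Ew.
  apply/(pairwiseP x0) => a b; rewrite !inE => Ha Hb Hab.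
  apply/implyP => Hx; apply/implyP => Hy.
  case/orP: (chain Hx Hy) => // Hyx; exfalso.
  have Hne : nth x0 w b != nth x0 w a by rewrite nth_uniq // eq_sym neq_ltn Hab.
  have : index (nth x0 w b) w < index (nth x0 w a) w.
    by case: Hw => _; apply; rewrite /lt Hne Hyx.
  by rewrite !index_uniq // ltnNge (ltnW Hab).
apply: (sub_in_pairwise (P := le i)) (pairwise_filter _ H); last exact: filter_all.
by move=> x y Hx Hy /implyP /(_ Hx) /implyP /(_ Hy).
Qed.

Lemma filter_chain i w1 w2 : linext le w1 -> linext le w2 ->
  filter (le i) w1 = filter (le i) w2.
Proof.
move=> H1 H2; apply: (pairwise_eq (r := le)).
- by move=> a b /andP [] ; apply: le_anti.
- exact: pairwise_chain.
- exact: pairwise_chain.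
apply: perm_filter; case: H1 H2 => P1 _ [P2 _].
by apply: perm_trans P1 _; rewrite perm_sym.
Qed.

Lemma iter_hatd_linext k i w : linext le w -> linext le (iter k (hatd le i) w).
Proof. by elim: k => //= k IH Hw; apply: hatd_linext; apply: IH. Qed.

Lemma iter_hatd_filter k i w (T : pred 'I_n) : linext le w ->
  (forall x, T x -> ~~ le i x) -> filter T (iter k (hatd le i) w) = filter T w.
Proof.
move=> Hw HT; elim: k => //= k IH.
by rewrite hatd_filter ?IH //; apply: iter_hatd_linext.
Qed.

Lemma hatd_iter i w : linext le w ->
  iter n (hatd le i) w = filter (predC (le i)) w ++ filter (le i) (enum 'I_n).
Proof.
move=> Hw; have Hv := iter_hatd_linext n i Hw.
have Hmap : forall k, map (le i) (iter k (hatd le i) w) = iter k fb (map (le i) w).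
  elim=> //= k IH; rewrite hatd_mask ?IH //; exact: iter_hatd_linext.
have Hcnt : count (le i) (enum 'I_n) = count (le i) w.
  by case: Hw => /permP ->.
have Ecm : count (preim (le i) id) w = count (le i) w by apply: eq_count.
apply: (eq_by_mask (p := le i)).
- rewrite Hmap iter_fb_fin count_map Ecm ?size_map ?linext_size //.
  + rewrite map_cat map_filterC map_filterT Hcnt; congr (nseq _ _ ++ _).
    by have := count_predC (le i) w; rewrite linext_size // => H; rewrite -[X in X - _]H addKn.
  + by rewrite -has_count; apply/hasP; exists i; rewrite ?linext_mem ?le_refl.
  + by rewrite -[X in _ <= X](linext_size Hw) count_size.
- by rewrite filter_cat filterCT (filter_chain _ Hv enum_linext) filter_id.
- rewrite filter_cat filterTC cats0 filter_id.
  by apply: iter_hatd_filter.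
Qed.


Lemma act_cat s t w : act le (s ++ t) w = act le t (act le s w).
Proof. by rewrite /act foldl_cat. Qed.

Lemma act_nseq k i w : act le (nseq k i) w = iter k (hatd le i) w.
Proof. by rewrite /act; elim: k w => // k IH w; rewrite iterSr /= IH. Qed.

Lemma Iset_step x i v : Iset le x i -> linext le v -> act le x (hatd le i v) = act le x v.
Proof. by move=> Hi Hv; exact: (Hi v Hv). Qed.

Lemma Iset_iter x i k w : Iset le x i -> linext le w ->
  act le x (iter k (hatd le i) w) = act le x w.
Proof.
move=> Hi Hw; elim: k => //= k IH.
by rewrite Iset_step ?IH //; apply: iter_hatd_linext.
Qed.

Lemma upper x : upper_set le (Iset le x).
Proof.
move=> i j Hi Hij w Hw.
change (act le x (hatd le j w) = act le x w).
rewrite -(Iset_iter n Hi (hatd_linext j Hw)) -[RHS](Iset_iter n Hi Hw).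
rewrite !hatd_iter //; last exact: hatd_linext.
congr (act le x (_ ++ _)).
apply: hatd_filter => // y /=.
by apply: contra => Hjy; exact: le_trans Hij Hjy.
Qed.

Definition Uof (ss : seq 'I_n) (y : 'I_n) : bool := has (fun s => le s y) ss.

Lemma blocks ss : exists sg, all (Uof ss) sg /\ forall w, linext le w ->
  act le (flatten [seq nseq n s | s <- ss]) w = filter (predC (Uof ss)) w ++ sg.
Proof.
elim: ss => [|s ss [sg [Hall IH]]].
  exists [::]; split => // w Hw; rewrite /= cats0.
  by rewrite (eq_filter (a2 := predT)) ?filter_predT.
exists (filter (predC (Uof ss)) (filter (le s) (enum 'I_n)) ++ sg); split.
  rewrite all_cat; apply/andP; split.
    apply/allP => y; rewrite !mem_filter => /and3P [_ Hsy _].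
    by rewrite /Uof /= Hsy.
  by apply: sub_all Hall => y; rewrite /Uof /= => ->; rewrite orbT.
move=> w Hw; rewrite /= act_cat act_nseq IH; last exact: iter_hatd_linext.
rewrite hatd_iter // filter_cat -catA -filter_predI; congr (_ ++ _).
by apply: eq_filter => y; rewrite /Uof /= negb_or andbC.
Qed.


Lemma act_stable x s w : (forall a, a \in s -> Iset le x a) -> linext le w ->
  act le x (act le s w) = act le x w.
Proof.
elim: s w => [|a s IH] w Hs Hw //.
change (act le x (act le s (hatd le a w)) = act le x w).
rewrite IH; first by apply: Iset_step => //; apply: Hs; rewrite mem_head.
  by move=> b Hb; apply: Hs; rewrite inE Hb orbT.
exact: hatd_linext.
Qed.

Lemma main x : upper_set le (Iset le x) /\
  exists e : seq 'I_n, idem_elt le e /\ forall i : 'I_n, Iset le x i <-> Rfactor le e i.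
Proof.
split; first exact: upper.
have [sS HsS] := exists_list (Iset le x) (enum 'I_n).
have HS : forall y, y \in sS <-> Iset le x y.
  by move=> y; split; [case/HsS | move=> H; apply/HsS; rewrite mem_enum].
pose U := Uof sS.
have HU : forall y, U y <-> Iset le x y.
  move=> y; split.
    by case/hasP => s Hs Hsy; exact: upper (proj1 (HS s) Hs) Hsy.
  by move=> Hy; apply/hasP; exists y; [exact/HS | exact: le_refl].
pose e := flatten [seq nseq n s | s <- sS].
have [sg [Hall Hb]] := blocks sS.
have He : forall w, linext le w -> act le x (act le e w) = act le x w.
  move=> w Hw; apply: act_stable => // y.
  move/flattenP => [t /mapP [s Hs ->]]; rewrite mem_nseq => /andP [_ /eqP ->].
  exact/HS.
have HD : filter (predC U) sg = [::].
  by move: Hall; rewrite /U; elim: (sg) => //= a t IH /andP [Ha /IH]; rewrite Ha.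
exists e; split.
  move=> w Hw; have Hw' := act_linext e Hw.
  by rewrite act_cat (Hb _ Hw') (Hb _ Hw) filter_cat filter_id HD cats0.
pose W0 := act le e (enum 'I_n).
have HW0 : W0 = filter (predC U) (enum 'I_n) ++ sg := Hb _ enum_linext.
have P0 : common_suffix le e (drop (size W0 - 0) W0).
  by move=> w Hw; rewrite subn0 drop_size suffix0s.
have [k [Hk Pk Hmax]] :=
  @exists_max (fun k => common_suffix le e (drop (size W0 - k) W0)) (size W0) P0.
have Hv : is_rfactor le e (drop (size W0 - k) W0).
  split => // v' Hv'.
  have Hs' : suffix v' W0 := Hv' _ enum_linext.
  have Hsz := size_suffix Hs'.
  have Ev' : v' = drop (size W0 - size v') W0 by move: Hs'; rewrite suffixE => /eqP.
  rewrite size_drop; have := Hmax (size v') Hsz; rewrite -Ev' => /(_ Hv'); lia.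
have Hsg : common_suffix le e sg.
  by move=> w Hw; rewrite Hb //; exact: suffix_suffix.
move=> i; split.
  move=> Hi; exists (drop (size W0 - k) W0); split => //.
  have Hsgv := suffix_of_suffix (Hsg _ enum_linext) (proj1 Hv _ enum_linext) (proj2 Hv _ Hsg).
  have HUi : U i := proj2 (HU i) Hi.
  have Hisg : i \in sg.
    have := linext_mem i (act_linext e enum_linext).
    by rewrite -/W0 HW0 mem_cat mem_filter /= HUi.
  by case/suffixP: Hsgv => p ->; rewrite mem_cat Hisg orbT.
case=> v' [[Hc Hmx] Hiv]; apply: NNPP => Hni.
have HUi : ~~ U i by apply/negP => /HU.
have Hv'W : suffix v' W0 := Hc _ enum_linext.
have HsgW : suffix sg W0 := Hsg _ enum_linext.
case: (leqP (size v') (size sg)) => Hsz.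
  have := suffix_of_suffix Hv'W HsgW Hsz; case/suffixP => p Ep.
  have := allP Hall i; rewrite Ep mem_cat Hiv orbT => /(_ isT).
  by rewrite -/U (negbTE HUi).
have := suffix_of_suffix HsgW Hv'W (ltnW Hsz); case/suffixP => v1 Ev1.
case/lastP: v1 Ev1 => [|p1 d] Ev1.
  by move: Hsz; rewrite Ev1 ltnn.
have key : forall w, linext le w -> exists q, filter (predC U) w = rcons q d.
  move=> w Hw; have := Hc w Hw; rewrite Hb // Ev1 => /suffixP [q Eq].
  rewrite catA in Eq; have := catIr Eq => ->.
  by exists (q ++ p1); rewrite rcons_cat.
have HDd : ~~ U d.
  have [q Eq] := key _ enum_linext.
  have : d \in filter (predC U) (enum 'I_n) by rewrite Eq mem_rcons mem_head.
  by rewrite mem_filter => /andP [].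
apply: (negP HDd); apply/HU.
move=> w Hw; change (act le x (hatd le d w) = act le x w).
rewrite -(He _ (hatd_linext d Hw)) -[RHS](He _ Hw) (Hb _ (hatd_linext d Hw)) (Hb _ Hw).
congr (act le x (_ ++ _)).
pose T := [pred y | (predC U y) && (y != d)].
have HfT : forall u, linext le u -> filter (predC U) u = rcons (filter T u) d.
  move=> u Hu; have [q Eq] := key u Hu.
  have Hdq : d \notin q.
    have := filter_uniq (predC U) (linext_uniq Hu).
    by rewrite Eq rcons_uniq => /andP [].
  rewrite Eq; congr rcons.
  have -> : filter T u = filter (predC1 d) (filter (predC U) u).
    by rewrite -filter_predI; apply: eq_filter => y; rewrite /= andbC.
  rewrite Eq filter_rcons /= eqxx /=.
  apply/esym/all_filterP/allP => y Hy /=; apply/negP => /eqP Eyd.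
  by move: Hdq; rewrite -Eyd Hy.
rewrite (HfT _ (hatd_linext d Hw)) (HfT _ Hw); congr rcons.
apply: hatd_filter => // y /andP [HDy Hyd]; apply/negP => Hdy.
have [q Eq] := key _ Hw.
have Hlt : index d w < index y w.
  by case: Hw => _; apply; rewrite /lt eq_sym Hyd Hdy.
have := index_filter_lt (linext_uniq Hw) HDd HDy (linext_mem d Hw) (linext_mem y Hw) Hlt.
have Hdq : d \notin q.
  have := filter_uniq (predC U) (linext_uniq Hw).
  by rewrite Eq rcons_uniq => /andP [].
have Hyq : y \in q.
  have : y \in filter (predC U) w by rewrite mem_filter HDy linext_mem.
  by rewrite Eq mem_rcons inE (negbTE Hyd).
rewrite Eq -cats1 !index_cat (negbTE Hdq) Hyq /= eqxx addn0.
by rewrite ltnNge (ltnW (_ : index y q < size q)) // index_mem.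
Qed.

End Aux.

Theorem lemma6p8 (n : nat) (le : rel 'I_n)
  (Hforest : rooted_forest le) (Hnat : natural_labeling le)
  (x : seq 'I_n) :
  upper_set le (Iset le x) /\
  exists e : seq 'I_n, idem_elt le e /\
    forall i : 'I_n, Iset le x i <-> Rfactor le e i.
Proof.
case: Hforest => Hp Hc.
exact: (main Hp Hc Hnat x).
Qed.
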